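(* Let $Q\subseteq V$ be a polyhedron, $F$ a face of $Q$, and $v\in V$. Then the function $\overline{j}_{C_F+v}:\mathrm{Def}^+(Q)\to\mathbb Z$ defined by $\overline{j}_{C_F+v}(P)=1$ if $C_F+v$ tightly contains $P$ and $\overline{j}_{C_F+v}(P)=0$ otherwise, is valuative on $\mathrm{Def}^+(Q)$ (equivalently, it extends to a $\mathbb Z$-linear map $\mathbb I(\mathrm{Def}^+(Q))\to\mathbb Z$).
   Context: $V$ is a finite-dimensional real vector space with inner product $\langle\cdot,\cdot\rangle$. For a polyhedron $P\subseteq V$, $\mathbf 1_P:V\to\mathbb Z$ is its indicator function. For a family $\mathscr P$ of polyhedra, the indicator group $\mathbb I(\mathscr P)$ is the $\mathbb Z$-submodule of $\mathbb Z^V$ spanned by $\{\mathbf 1_P: P\in\mathscr P\}$. A function $f:\mathscr P\to A$ to an abelian group is valuative (a valuation) if $\sum_i a_i f(P_i)=0$ whenever $\sum_i a_i\mathbf 1_{P_i}=0$ with $a_i\in\mathbb Z$, $P_i\in\mathscr P$ (equivalently, $f$ extends to a $\mathbb Z$-linear map on $\mathbb I(\mathscr P)$). For a polyhedron $Q$, $\Sigma_Q$ is its outer normal fan; for a face $F$, $\sigma_F\in\Sigma_Q$ is the cone of linear functionals attaining their maximum on $Q$ exactly on $F$; the tangent cone of $Q$ at $F$ is $C_F=\sigma_F^\vee=\mathrm{Cone}(v'-v\mid v\in F, v'\in Q)$. A polyhedron $P$ is an extended deformation of $Q$ if each cone of $\Sigma_P$ is a union of cones of $\Sigma_Q$; $\mathrm{Def}^+(Q)$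 denotes the set of all extended deformations of $Q$. For a cone $C$, $\mathrm{lineal}(C)$ is its lineality space (the maximal linear subspace contained in $C$). A translate $C+v$ tightly contains a polyhedron $P$ if $P\subseteq C+v$ and $P\cap(\mathrm{lineal}(C)+v)\neq\emptyset$. *)

(* Defs.v *)
From HB Require Import structures.
From mathcomp Require Import all_boot all_order all_algebra.
From mathcomp Require Import boolp classical_sets reals.
Set Implicit Arguments. Unset Strict Implicit. Unset Printing Implicit Defensive.
Import Order.TTheory GRing.Theory Num.Theory.
Local Open Scope ring_scope.
Local Open Scope classical_set_scope.

(* V = R^n (row vectors) with the standard inner product; every finite-dimensional
   real inner product space is isometric to such a space. *)
Section Polyhedra.
Variables (R : realType) (n : nat).
Local Notation V := 'rV[R]_n.

Definition dotp (u x : V) : R := \sum_(i < n) u 0 i * x 0 i.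

Definition polyhedron (P : set V) : Prop :=
  exists (m : nat) (A : 'I_m -> V) (b : 'I_m -> R),
    P = [set x | forall i, dotp (A i) x <= b i].

Definition normal_cone (Q F : set V) : set V :=
  [set u | (forall y, F y -> forall x, Q x -> dotp u x <= dotp u y) /\
           (forall y, Q y -> (forall x, Q x -> dotp u x <= dotp u y) -> F y)].

Definition face (Q F : set V) : Prop :=
  F !=set0 /\ F `<=` Q /\ normal_cone Q F !=set0.

Definition normal_fan (Q : set V) : set (set V) :=
  [set s | exists F, face Q F /\ s = normal_cone Q F].

Definition ext_deformation (Q P : set V) : Prop :=
  polyhedron P /\
  forall s, normal_fan P s ->
    exists S : set (set V), S `<=` normal_fan Q /\ s = \bigcup_(c in S) c.

Definition Defplus (Q : set V) : set (set V) := [set P | ext_deformation Q P].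

Definition cone_hull (S : set V) : set V :=
  [set x | exists (k : nat) (s : 'I_k -> V) (c : 'I_k -> R),
     (forall i, 0 <= c i /\ S (s i)) /\ x = \sum_(i < k) c i *: s i].

Definition tangent_cone (Q F : set V) : set V :=
  cone_hull [set w | exists v v', F v /\ Q v' /\ w = v' - v].

Definition subspace (L : set V) : Prop :=
  L 0 /\ (forall x y, L x -> L y -> L (x + y)) /\
  (forall (a : R) x, L x -> L (a *: x)).

(* Lineality space: the maximal linear subspace contained in C
   (= union of all linear subspaces contained in C). *)
Definition lineal (C : set V) : set V :=
  [set x | exists L, subspace L /\ L `<=` C /\ L x].

Definition translate (C : set V) (v : V) : set V := [set c + v | c in C].

Definition tightly_contains (C : set V) (v : V) (P : set V) : Prop :=
  P `<=` translate C v /\ P `&` translate (lineal C) v !=set0.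

Definition indicator (P : set V) (x : V) : int := if `[< P x >] then 1 else 0.

Definition jbar (C : set V) (v : V) (P : set V) : int :=
  if `[< tightly_contains C v P >] then 1 else 0.

Definition valuative (Fam : set (set V)) (f : set V -> int) : Prop :=
  forall (k : nat) (a : 'I_k -> int) (P : 'I_k -> set V),
    (forall i, Fam (P i)) ->
    (forall x, \sum_(i < k) a i * indicator (P i) x = 0) ->
    \sum_(i < k) a i * f (P i) = 0.

End Polyhedra.

(* Main.v *)
Require Import Defs.
From HB Require Import structures.
From mathcomp Require Import all_boot all_order all_algebra.
From mathcomp Require Import boolp classical_sets reals.
From mathcomp Require Import ring lra.
Set Implicit Arguments. Unset Strict Implicit. Unset Printing Implicit Defensive.
Import Order.TTheory GRing.Theory Num.Theory.
Local Open Scope ring_scope.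
Local Open Scope classical_set_scope.

Section Poly.
Variables (R : realType) (n : nat).
Local Notation V := 'rV[R]_n.

Lemma dotpDr (u x y : V) : dotp u (x + y) = dotp u x + dotp u y.
Proof. by rewrite /dotp -big_split; apply: eq_bigr => i _; rewrite mxE mulrDr. Qed.
Lemma dotpDl (u w x : V) : dotp (u + w) x = dotp u x + dotp w x.
Proof. by rewrite /dotp -big_split; apply: eq_bigr => i _; rewrite mxE mulrDl. Qed.
Lemma dotpZr a (u x : V) : dotp u (a *: x) = a * dotp u x.
Proof. by rewrite /dotp mulr_sumr; apply: eq_bigr => i _; rewrite mxE mulrCA. Qed.
Lemma dotpZl a (u x : V) : dotp (a *: u) x = a * dotp u x.
Proof. by rewrite /dotp mulr_sumr; apply: eq_bigr => i _; rewrite mxE mulrA. Qed.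
Lemma dotp0r (u : V) : dotp u 0 = 0.
Proof. by rewrite /dotp big1 // => i _; rewrite mxE mulr0. Qed.
Lemma dotp0l (x : V) : dotp 0 x = 0.
Proof. by rewrite /dotp big1 // => i _; rewrite mxE mul0r. Qed.
Lemma dotpNr (u x : V) : dotp u (- x) = - dotp u x.
Proof. by rewrite -scaleN1r dotpZr mulN1r. Qed.
Lemma dotpNl (u x : V) : dotp (- u) x = - dotp u x.
Proof. by rewrite -scaleN1r dotpZl mulN1r. Qed.
Lemma dotpBr (u x y : V) : dotp u (x - y) = dotp u x - dotp u y.
Proof. by rewrite dotpDr dotpNr. Qed.
Lemma dotpBl (u w x : V) : dotp (u - w) x = dotp u x - dotp w x.
Proof. by rewrite dotpDl dotpNl. Qed.
Lemma dotp_suml (I : Type) (r : seq I) (P : pred I) (F : I -> V) x :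
  dotp (\sum_(i <- r | P i) F i) x = \sum_(i <- r | P i) dotp (F i) x.
Proof. by apply: (big_morph (fun u => dotp u x)) => [u w|]; rewrite ?dotpDl ?dotp0l. Qed.
Lemma dotp_delta (j : 'I_n) (x : V) : dotp (delta_mx 0 j) x = x 0 j.
Proof.
rewrite /dotp (bigD1 j) //= big1 => [|i /negbTE ij]; first by rewrite mxE !eqxx mul1r addr0.
by rewrite mxE ij andbF mul0r.
Qed.

Definition polyS (s : seq (V * R)) : set V :=
  [set x | all (fun c => dotp c.1 x <= c.2) s].

Lemma polyhedronP (P : set V) : polyhedron P <-> exists s, P = polyS s.
Proof.
split.
- case=> m [A [b ->]]; exists [seq (A i, b i) | i <- enum 'I_m].
  apply/seteqP; split => x /=.
  + by move=> H; apply/allP => c /mapP [i _ ->] /=; exact: H.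
  + move/allP => H i; apply: (H (A i, b i)); apply/mapP; exists i => //.
    by rewrite mem_enum.
- case=> s ->; exists (size s), (fun i => (nth (0,0) s i).1), (fun i => (nth (0,0) s i).2).
  apply/seteqP; split => x /=.
  + by move/(all_nthP (0,0)) => H i; exact: H.
  + by move=> H; apply/(all_nthP (0,0)) => i lti; exact: (H (Ordinal lti)).
Qed.

Lemma polyS_cat s1 s2 : polyS (s1 ++ s2) = polyS s1 `&` polyS s2.
Proof.
apply/seteqP; split => x; rewrite /polyS /= all_cat; first by move/andP.
by case=> -> ->.
Qed.

Lemma polyS_convex s (x y : V) (l : R) : polyS s x -> polyS s y -> 0 <= l <= 1 ->
  polyS s ((1 - l) *: x + l *: y).
Proof.
move=> /allP Hx /allP Hy /andP [l0 l1]; apply/allP => c cs.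
rewrite dotpDr !dotpZr.
have := Hx c cs; have := Hy c cs.
set a := dotp c.1 x; set b := dotp c.1 y => hb ha.
nra.
Qed.

Definition sat (c : V * R * R) (x : V) (t : R) := dotp c.1.1 x + c.1.2 * t <= c.2.
Definition satall (S : seq (V * R * R)) x t := all (fun c => sat c x t) S.
Definition cadd (c d : V * R * R) : V * R * R := (c.1.1 + d.1.1, c.1.2 + d.1.2, c.2 + d.2).
Definition cscale (a : R) (c : V * R * R) : V * R * R := (a *: c.1.1, a * c.1.2, a * c.2).

Inductive conic (S : seq (V * R * R)) : V * R * R -> Prop :=
 | conic_base c : c \in S -> conic S c
 | conic_zero : conic S (0, 0, 0)
 | conic_add c d : conic S c -> conic S d -> conic S (cadd c d)
 | conic_scale a c : 0 <= a -> conic S c -> conic S (cscale a c).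

Lemma sat_conic (S : seq (V * R * R)) x t c : satall S x t -> conic S c -> sat c x t.
Proof.
move=> /allP HS; elim => {c}.
- by move=> c /HS.
- by rewrite /sat /= dotp0l mul0r addr0.
- move=> c d _ hc _ hd; rewrite /sat /= dotpDl mulrDl.
  move: hc hd; rewrite /sat; lra.
- move=> a c a0 _ hc; rewrite /sat /= dotpZl -mulrA -mulrDr.
  exact: ler_wpM2l.
Qed.

Lemma conic_trans (S S' : seq (V * R * R)) d : (forall c, c \in S' -> conic S c) -> conic S' d -> conic S d.
Proof.
move=> H; elim => {d}.
- exact: H.
- exact: conic_zero.
- by move=> c d _ hc _ hd; apply: conic_add.
- by move=> a c a0 _ hc; apply: conic_scale.
Qed.

Lemma ex_lb (s : seq R) : exists m, forall x, x \in s -> m <= x.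
Proof.
elim: s => [|a s [m Hm]]; first by exists 0.
exists (Order.min a m) => x; rewrite in_cons => /orP [/eqP ->|/Hm h].
- by rewrite ge_min lexx.
- by rewrite ge_min h orbT.
Qed.

Lemma ex_min (s : seq R) z0 : z0 \in s -> exists2 m, m \in s & forall z, z \in s -> m <= z.
Proof.
elim: s z0 => [//|a s IH] z0 _.
case: (boolP (s == [::])) => [/eqP ->|].
- by exists a; rewrite ?in_cons ?eqxx // => z; rewrite in_cons in_nil orbF => /eqP ->.
- case: s IH => [//|b s] IH _.
  have [m ms Hm] := IH b (mem_head _ _).
  case: (leP a m) => am.
  + exists a; first exact: mem_head.
    move=> z; rewrite in_cons => /orP [/eqP ->//|/Hm]; exact: le_trans.
  + exists m; first by rewrite in_cons ms orbT.
    move=> z; rewrite in_cons => /orP [/eqP ->|/Hm //]; exact: ltW.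
Qed.

Lemma interval_pick (Ls Us : seq R) :
  (forall l u, l \in Ls -> u \in Us -> l <= u) ->
  exists s, (forall l, l \in Ls -> l <= s) /\ (forall u, u \in Us -> s <= u).
Proof.
elim: Ls => [|l Ls IH] H.
- by have [m Hm] := ex_lb Us; exists m; split.
- case: IH => [l' u Hl Hu|s [H1 H2]]; first by apply: H; rewrite ?in_cons ?Hl ?orbT.
  exists (Order.max l s); split.
  + move=> l0; rewrite in_cons => /orP [/eqP ->|/H1 h]; rewrite le_max ?lexx //.
    by rewrite h orbT.
  + move=> u hu; rewrite ge_max (H2 _ hu) andbT; apply: H => //.
    by rewrite in_cons eqxx.
Qed.

Section FMstep.
Variable j : 'I_n.
Definition coef (c : V * R * R) := c.1.1 0 j.
Definition comb (p q : V * R * R) := cadd (cscale (- coef q) p) (cscale (coef p) q).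
Definition FM (S : seq (V * R * R)) :=
  [seq c <- S | coef c == 0] ++
  [seq comb p q | p <- [seq c <- S | 0 < coef c], q <- [seq c <- S | coef c < 0]].

Lemma FM_conic (S : seq (V * R * R)) c : c \in FM S -> conic S c.
Proof.
rewrite mem_cat => /orP [|/allpairsP [[p q] /= [pS qS ->]]].
- by rewrite mem_filter => /andP [_ cS]; apply: conic_base.
- move: pS qS; rewrite !mem_filter => /andP [pp pS] /andP [qn qS].
  apply: conic_add; apply: conic_scale; rewrite ?oppr_ge0 ?ltW //; exact: conic_base.
Qed.

Lemma FM_coef (S : seq (V * R * R)) c : c \in FM S -> coef c = 0.
Proof.
rewrite mem_cat => /orP [|/allpairsP [[p q] /= [pS qS ->]]].
- by rewrite mem_filter => /andP [/eqP].
- by rewrite /comb /cadd /cscale /coef /= !mxE mulNr mulrC addNr.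
Qed.

Lemma FM_coef0 (S : seq (V * R * R)) (j' : 'I_n) : (forall c, c \in S -> c.1.1 0 j' = 0) ->
  forall c, c \in FM S -> c.1.1 0 j' = 0.
Proof.
move=> H c; rewrite mem_cat => /orP [|/allpairsP [[p q] /= [pS qS ->]]].
- by rewrite mem_filter => /andP [_ /H].
- move: pS qS; rewrite !mem_filter => /andP [_ /H pS] /andP [_ /H qS].
  by rewrite /comb /cadd /cscale /= !mxE pS qS !mulr0 addr0.
Qed.

Definition setc (x : V) (s : R) : V := \row_k (if k == j then s else x 0 k).

Lemma dotp_setc g x s : dotp g (setc x s) = dotp g (setc x 0) + g 0 j * s.
Proof.
rewrite /dotp (bigD1 j) //= [X in _ = X + _](bigD1 j) //= !mxE eqxx mulr0 add0r addrC.
congr (_ + _); apply: eq_bigr => i /negbTE ij; by rewrite !mxE ij.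
Qed.

Lemma setc_id (x : V) : setc x (x 0 j) = x.
Proof. by apply/rowP => k; rewrite mxE; case: eqP => // ->. Qed.

Lemma setc_setc (x : V) a b : setc (setc x a) b = setc x b.
Proof. by apply/rowP => k; rewrite !mxE; case: eqP. Qed.

Lemma sat_coef0 c x s t : coef c = 0 -> sat c (setc x s) t = sat c x t.
Proof.
move=> h; rewrite /sat; congr (_ + _ <= _).
have e y : dotp c.1.1 y = dotp c.1.1 (setc y 0).
  transitivity (dotp c.1.1 (setc y (y 0 j))); first by rewrite setc_id.
  rewrite (dotp_setc _ y (y 0 j)).
  by move: h; rewrite /coef => ->; rewrite mul0r addr0.
by rewrite e [RHS]e setc_setc.
Qed.

Lemma FM_sound (S : seq (V * R * R)) x t : satall S x t -> satall (FM S) x t.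
Proof. by move=> H; apply/allP => c /FM_conic; apply: sat_conic. Qed.

Lemma FM_exact (S : seq (V * R * R)) x t : satall (FM S) x t -> exists s, satall S (setc x s) t.
Proof.
move=> /allP HF.
pose x0 := setc x 0.
pose rest (c : V * R * R) := dotp c.1.1 x0 + c.1.2 * t.
have satE c s : sat c (setc x s) t = (rest c + coef c * s <= c.2).
  by rewrite /sat dotp_setc /rest /coef addrAC.
pose Ps := [seq c <- S | 0 < coef c]; pose Ns := [seq c <- S | coef c < 0].
pose Ls := [seq (c.2 - rest c) / coef c | c <- Ns].
pose Us := [seq (c.2 - rest c) / coef c | c <- Ps].
have HLU : forall l u, l \in Ls -> u \in Us -> l <= u.
  move=> l u /mapP [q qN ->] /mapP [p pP ->].
  have hc : comb p q \in FM S by rewrite mem_cat; apply/orP; right; apply/allpairsP; exists (p, q).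
  have := HF _ hc; rewrite -(@sat_coef0 (comb p q) x 0 t (FM_coef hc)).
  rewrite /sat /comb /cadd /cscale /= dotpDl !dotpZl.
  move: pP qN; rewrite !mem_filter => /andP [pp _] /andP [qn _].
  move: pp qn; rewrite /rest -/x0.
  set pj := coef p; set qj := coef q.
  set rp := dotp p.1.1 x0; set rq := dotp q.1.1 x0.
  move=> pp qn h.
  set al := (q.2 - (rq + q.1.2 * t)) / qj.
  set be := (p.2 - (rp + p.1.2 * t)) / pj.
  have ha : al * qj = q.2 - (rq + q.1.2 * t) by rewrite /al divfK // lt_eqF.
  have hb : be * pj = p.2 - (rp + p.1.2 * t) by rewrite /be divfK // gt_eqF.
  have : 0 <= (pj * qj) * (al - be).
    have -> : (pj * qj) * (al - be) = pj * (al * qj) - qj * (be * pj) by ring.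
    rewrite ha hb; lra.
  rewrite nmulr_rge0 ?subr_le0 //.
  by rewrite pmulr_rlt0.
have [s [H1 H2]] := interval_pick HLU.
exists s; apply/allP => c cS.
case: (ltgtP (coef c) 0) => hc.
- rewrite satE.
  have hl : (c.2 - rest c) / coef c <= s by apply: H1; apply/mapP; exists c => //; rewrite mem_filter hc.
  have := ler_wnM2l (ltW hc) hl.
  rewrite [coef c * (_ / _)]mulrC divfK ?lt_eqF //; lra.
- rewrite satE.
  have hu : s <= (c.2 - rest c) / coef c by apply: H2; apply/mapP; exists c => //; rewrite mem_filter hc.
  have := ler_wpM2l (ltW hc) hu.
  rewrite [coef c * (_ / _)]mulrC divfK ?gt_eqF //; lra.
- rewrite sat_coef0 //; apply: HF; rewrite mem_cat mem_filter hc eqxx cS //.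
Qed.

End FMstep.

Definition elim (js : seq 'I_n) (S : seq (V * R * R)) := foldr (fun j S => FM j S) S js.

Lemma elim_conic js (S : seq (V * R * R)) c : c \in elim js S -> conic S c.
Proof.
elim: js c => [|j js IH] c /=; first exact: conic_base.
move/FM_conic; apply: conic_trans; exact: IH.
Qed.

Lemma elim_zero js (S : seq (V * R * R)) c : c \in elim js S -> forall j, j \in js -> c.1.1 0 j = 0.
Proof.
elim: js c => [//|j js IH] c /= hc j'; rewrite in_cons => /orP [/eqP ->|hj'].
- exact: FM_coef hc.
- apply: (FM_coef0 (S := elim js S)) hc => c' hc'; exact: IH.
Qed.

Lemma elim_equiv js (S : seq (V * R * R)) t : (exists x, satall S x t) <-> (exists x, satall (elim js S) x t).
Proof.
elim: js => [//|j js IH] /=; rewrite IH; split.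
- by case=> x hx; exists x; apply: FM_sound.
- by case=> x /FM_exact [s hs]; exists (setc j x s).
Qed.

Definition elim_all (S : seq (V * R * R)) := elim (enum 'I_n) S.

Lemma elim_all_zero (S : seq (V * R * R)) c : c \in elim_all S -> c.1.1 = 0.
Proof.
move=> hc; apply/rowP => k; rewrite mxE; apply: (elim_zero hc); by rewrite mem_enum.
Qed.

Lemma elim_final (S : seq (V * R * R)) t : (exists x, satall S x t) <-> (forall c, c \in elim_all S -> c.1.2 * t <= c.2).
Proof.
rewrite (elim_equiv (enum 'I_n)) -/(elim_all S); split.
- case=> x /allP hx c hc; have := hx c hc; by rewrite /sat (elim_all_zero hc) dotp0l add0r.
- move=> H; exists 0; apply/allP => c hc; by rewrite /sat (elim_all_zero hc) dotp0l add0r H.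
Qed.

Lemma farkas (S : seq (V * R * R)) : (forall x, ~~ satall S x 0) ->
  exists c, [/\ conic S c, c.1.1 = 0 & c.2 < 0].
Proof.
move=> H.
have : ~ (forall c, c \in elim_all S -> c.1.2 * 0 <= c.2).
  by rewrite -elim_final => -[x hx]; have := H x; rewrite hx.
move/existsNP => [c]; move/not_implyP => [hc hh]; exists c; split.
- exact: elim_conic hc.
- exact: elim_all_zero hc.
- by rewrite ltNge; apply/negP; move: hh; rewrite mulr0.
Qed.

End Poly.

Section LP.
Variables (R : realType) (n : nat).
Local Notation V := 'rV[R]_n.

Lemma lp_max (s : seq (V * R)) (w : V) (B : R) :
  (exists x, polyS s x) -> (forall x, polyS s x -> dotp w x <= B) ->
  exists g, polyS s g /\ forall y, polyS s y -> dotp w y <= dotp w g.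
Proof.
move=> [x0 hx0] hB.
pose S : seq (V * R * R) := [seq (c.1, 0, c.2) | c <- s] ++ [:: (- w, 1, 0)].
have satS x t : satall S x t = (all (fun c => dotp c.1 x <= c.2) s) && (t <= dotp w x).
  rewrite /satall all_cat all_map /= andbT /sat /= dotpNl mul1r addrC subr_le0.
  by congr (_ && _); apply: eq_all => c /=; rewrite mul0r addr0.
pose E := elim_all S.
have TE t : (forall c, c \in E -> c.1.2 * t <= c.2) <-> exists x, polyS s x /\ t <= dotp w x.
  rewrite -elim_final; split => -[x hx].
  - by move: hx; rewrite satS => /andP [h1 h2]; exists x.
  - by exists x; rewrite satS; apply/andP; case: hx.
have t0T : forall c, c \in E -> c.1.2 * dotp w x0 <= c.2 by apply/TE; exists x0.
have [c1 c1E c1p] : exists2 c, c \in E & 0 < c.1.2.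
  case: (pselect (exists2 c, c \in E & 0 < c.1.2)) => // hn; exfalso.
  have : exists x, polyS s x /\ B + 1 <= dotp w x.
    apply/TE => c cE.
    have hc : c.1.2 <= 0 by rewrite leNgt; apply/negP => h; apply: hn; exists c.
    apply: le_trans (t0T c cE); apply: (ler_wnM2l hc); have := hB _ hx0; lra.
  by case=> x [hx hxB]; have := hB _ hx; lra.
pose L := [seq c.2 / c.1.2 | c <- E & 0 < c.1.2].
have c1L : c1.2 / c1.1.2 \in L by apply/mapP; exists c1 => //; rewrite mem_filter c1p c1E.
have [m mL Hm] := ex_min c1L.
have [cm [cmE cmp me]] : exists c, [/\ c \in E, 0 < c.1.2 & m = c.2 / c.1.2].
  by move: mL => /mapP [cm]; rewrite mem_filter => /andP [cmp cmE] me; exists cm.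
have mT : forall c, c \in E -> c.1.2 * m <= c.2.
  have t0m : dotp w x0 <= m by rewrite me ler_pdivlMr // mulrC; exact: t0T.
  move=> c cE; case: (ltP 0 c.1.2) => hc.
  - have : m <= c.2 / c.1.2 by apply: Hm; apply/mapP; exists c => //; rewrite mem_filter hc cE.
    by rewrite ler_pdivlMr // mulrC.
  - apply: le_trans (t0T c cE); exact: (ler_wnM2l hc t0m).
have [g [hg hmg]] := proj1 (TE m) mT.
exists g; split => // y hy.
apply: le_trans hmg.
have yT := proj2 (TE (dotp w y)) (ex_intro _ y (conj hy (lexx _))).
by rewrite me ler_pdivlMr // mulrC; exact: yT.
Qed.

Lemma lp_min (s : seq (V * R)) (w : V) (B : R) :
  (exists x, polyS s x) -> (forall x, polyS s x -> B <= dotp w x) ->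
  exists g, polyS s g /\ forall y, polyS s y -> dotp w g <= dotp w y.
Proof.
move=> ne hB; have [|g [hg Hg]] := lp_max (w := - w) (B := - B) ne.
  by move=> x hx; rewrite dotpNl lerN2; exact: hB.
by exists g; split => // y hy; have := Hg y hy; rewrite !dotpNl lerN2.
Qed.

End LP.

Section Chi1.
Variable R : realType.

Definition indR (J : set R) t : int := if `[< J t >] then 1 else 0.
Definition nz (T : Type) (J : set T) : int := if `[< J !=set0 >] then 1 else 0.

Lemma ex_pos_below (s : seq R) : (forall x, x \in s -> 0 < x) ->
  exists2 d, 0 < d & forall x, x \in s -> d < x.
Proof.
elim: s => [|x s IH] H; first by exists 1.
have [d d0 Hd] := IH (fun y hy => H y (mem_behead (s := x :: s) hy)).
have x0 : 0 < x := H x (mem_head _ _).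
exists (Order.min d (x / 2)); first by rewrite lt_min d0 /=; lra.
move=> y; rewrite in_cons => /orP [/eqP ->|/Hd hy].
- have : Order.min d (x / 2) <= x / 2 by rewrite ge_min lexx orbT.
  lra.
- have : Order.min d (x / 2) <= d by rewrite ge_min lexx.
  lra.
Qed.

Lemma chi1 k (a : 'I_k -> int) (J : 'I_k -> set R) :
  (forall i x y z, J i x -> J i z -> x <= y -> y <= z -> J i y) ->
  (forall i, J i !=set0 -> (exists B, forall x, J i x -> B <= x) ->
     exists2 l, J i l & forall x, J i x -> l <= x) ->
  (forall i, J i !=set0 -> (exists B, forall x, J i x -> x <= B) ->
     exists2 h, J i h & forall x, J i x -> x <= h) ->
  (forall t, \sum_(i < k) a i * indR (J i) t = 0) ->
  \sum_(i < k) a i * nz (J i) = 0.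
Proof.
move=> Jconv Jmin Jmax HJ.
pose ismin i l := J i l /\ forall x, J i x -> l <= x.
pose ismax i h := J i h /\ forall x, J i x -> x <= h.
have ex_i i : exists Ti : seq R,
    (forall l, ismin i l -> l \in Ti) /\ (forall h, ismax i h -> h \in Ti).
  case: (pselect (exists l, ismin i l)) => [[l hl]|nl];
  case: (pselect (exists h, ismax i h)) => [[h hh]|nh].
  - exists [:: l; h]; split => [l' hl'|h' hh'].
    + have -> : l' = l by apply: le_anti; rewrite (hl'.2 _ hl.1) (hl.2 _ hl'.1).
      exact: mem_head.
    + have -> : h' = h by apply: le_anti; rewrite (hh'.2 _ hh.1) (hh.2 _ hh'.1).
      by rewrite !in_cons eqxx orbT.
  - exists [:: l]; split => [l' hl'|h' hh'].
    + have -> : l' = l by apply: le_anti; rewrite (hl'.2 _ hl.1) (hl.2 _ hl'.1).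
      exact: mem_head.
    + by exfalso; apply: nh; exists h'.
  - exists [:: h]; split => [l' hl'|h' hh'].
    + by exfalso; apply: nl; exists l'.
    + have -> : h' = h by apply: le_anti; rewrite (hh'.2 _ hh.1) (hh.2 _ hh'.1).
      exact: mem_head.
  - exists [::]; split => [l' hl'|h' hh'].
    + by exfalso; apply: nl; exists l'.
    + by exfalso; apply: nh; exists h'.
have [f Hf] := choice ex_i.
pose T := flatten [seq f i | i <- enum 'I_k].
have inT i x : x \in f i -> x \in T.
  by move=> hx; apply/flattenP; exists (f i) => //; apply: map_f; rewrite mem_enum.
have minT i l : ismin i l -> l \in T by move=> h; apply: (inT i); exact: (Hf i).1.
have maxT i h : ismax i h -> h \in T by move=> hh; apply: (inT i); exact: (Hf i).2.
have [d d0 Hd] : exists2 d, 0 < d & forall s t, s \in T -> t \in T -> s < t -> d < t - s.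
  have [|d d0 Hd] := @ex_pos_below [seq x <- [seq t - s | s <- T, t <- T] | 0 < x].
    by move=> x; rewrite mem_filter => /andP [].
  exists d => // s t sT tT st; apply: Hd; rewrite mem_filter subr_gt0 st /=.
  by apply/allpairsP; exists (s, t).
have [M HM] : exists M, forall t, t \in T -> M < t - d.
  have [m Hm] := ex_lb [seq t - d | t <- T].
  by exists (m - 1) => t tT; have := Hm _ (map_f _ tT); lra.
have key i : nz (J i) = indR (J i) M + \sum_(t <- undup T) (indR (J i) t - indR (J i) (t - d)).
  rewrite /nz; case: (pselect (J i !=set0)) => [ne|emp]; last first.
    have nJ y : ~ J i y by move=> hy; apply: emp; exists y.
    rewrite asboolF // /indR asboolF // add0r big1 // => t _.
    by rewrite !asboolF // subrr.
  rewrite asboolT //.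
  have noj t : t \in T -> (forall l, ismin i l -> l <> t) -> (J i t <-> J i (t - d)).
    move=> tT nm; split => [hJt|hJtd].
    - apply: contrapT => nJ.
      case: (pselect (exists B, forall x, J i x -> B <= x)) => [bb|nbb].
      + have [l hl Hl] := Jmin i ne bb.
        have lt := Hl _ hJt.
        case: (leP l (t - d)) => ltd.
          by apply: nJ; apply: (Jconv i l _ t) => //; lra.
        have lnt : l != t by apply/eqP; apply: nm; split.
        have : d < t - l by apply: Hd; [apply: (minT i); split|..|rewrite lt_neqAle lnt lt].
        lra.
      + apply: nbb; exists (t - d) => x hx; rewrite leNgt; apply/negP => hlt.
        by apply: nJ; apply: (Jconv i x _ t) => //; lra.
    - apply: contrapT => nJ.
      case: (pselect (exists B, forall x, J i x -> x <= B)) => [bb|nbb].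
      + have [h hh Hh] := Jmax i ne bb.
        have th := Hh _ hJtd.
        case: (leP t h) => tlh.
          by apply: nJ; apply: (Jconv i (t - d) _ h) => //; lra.
        have : d < t - h by apply: Hd => //; apply: (maxT i); split.
        lra.
      + apply: nbb; exists t => x hx; rewrite leNgt; apply/negP => hlt.
        by apply: nJ; apply: (Jconv i (t - d) _ x) => //; lra.
  have eqind t : t \in T -> (forall l, ismin i l -> l <> t) -> indR (J i) t = indR (J i) (t - d).
    move=> tT nm; rewrite /indR; have [h1 h2] := noj t tT nm.
    case: (asboolP (J i t)) => [/h1 /asboolT -> //|nt].
    by rewrite asboolF // => /h2.
  case: (pselect (exists B, forall x, J i x -> B <= x)) => [bb|nbb].
  - have [l hl Hl] := Jmin i ne bb.
    have lT : l \in T by apply: (minT i); split.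
    have nM : ~ J i M by move=> hM; have := Hl _ hM; have := HM _ lT; lra.
    rewrite /indR (asboolF nM) add0r (bigD1_seq l) ?mem_undup ?undup_uniq //=.
    rewrite asboolT // asboolF; last by move=> h; have := Hl _ h; lra.
    rewrite big1_seq ?addr0 // => t /andP [tl tT]; rewrite mem_undup in tT.
    rewrite -/(indR (J i) t) -/(indR (J i) (t - d)) eqind ?subrr //.
    move=> l' hl'; have -> : l' = l by apply: le_anti; rewrite (hl'.2 _ hl) (Hl _ hl'.1).
    by move=> e; move: tl; rewrite e eqxx.
  - have hM : J i M.
      have [y hy] := ne.
      have [x hx xM] : exists2 x, J i x & x <= M.
        apply: contrapT => hn; apply: nbb; exists M => x hx; rewrite leNgt; apply/negP => h.
        by apply: hn; exists x => //; apply: ltW.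
      have [z hz Mz] : exists2 z, J i z & M <= z.
        case: (pselect (exists B, forall x, J i x -> x <= B)) => [bb'|nbb'].
        + have [h hh Hh] := Jmax i ne bb'.
          exists h => //; have := HM h (maxT i h (conj hh Hh)); lra.
        + apply: contrapT => hn; apply: nbb'; exists M => x' hx'; rewrite leNgt; apply/negP => h.
          by apply: hn; exists x' => //; apply: ltW.
      exact: (Jconv i x M z).
    rewrite /indR asboolT // big1_seq ?addr0 // => t /andP [_ tT]; rewrite mem_undup in tT.
    rewrite -/(indR (J i) t) -/(indR (J i) (t - d)) eqind ?subrr //.
    move=> l' hl' _; apply: nbb; exists l'; exact: hl'.2.
under eq_bigr => i _ do rewrite key mulrDr mulr_sumr.
rewrite big_split /= HJ add0r exchange_big /= big1 // => t _.
rewrite (eq_bigr (fun i => a i * indR (J i) t - a i * indR (J i) (t - d))); last first.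
  by move=> i _; rewrite mulrBr.
by rewrite sumrB !HJ subrr.
Qed.

End Chi1.

Section Chi.
Variables (R : realType) (n : nat).
Local Notation V := 'rV[R]_n.

Definition Aset d (c : V) : set V := [set x | forall j : 'I_n, (d <= j)%N -> x 0 j = c 0 j].

Lemma polyS_coord (j : 'I_n) (t : R) :
  polyS [:: (delta_mx 0 j : V, t); (- delta_mx 0 j, - t)] = [set x : V | x 0 j = t].
Proof.
apply/seteqP; split => x; rewrite /polyS /= dotpNl !dotp_delta andbT lerN2.
- by move=> /andP [h1 h2]; apply: le_anti; rewrite h1 h2.
- by move=> ->; rewrite lexx.
Qed.

Lemma polyhedron_cap (P1 P2 : set V) : polyhedron P1 -> polyhedron P2 -> polyhedron (P1 `&` P2).
Proof.
move=> /polyhedronP [s1 ->] /polyhedronP [s2 ->]; apply/polyhedronP.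
by exists (s1 ++ s2); rewrite polyS_cat.
Qed.

Lemma polyhedron_coord (j : 'I_n) (t : R) : polyhedron [set x : V | x 0 j = t].
Proof. by apply/polyhedronP; exists [:: (delta_mx 0 j : V, t); (- delta_mx 0 j, - t)]; rewrite polyS_coord. Qed.

Lemma chi_ind d : (d <= n)%N -> forall c k (a : 'I_k -> int) (P : 'I_k -> set V),
  (forall i, polyhedron (P i)) -> (forall i, P i `<=` Aset d c) ->
  (forall x, \sum_(i < k) a i * indicator (P i) x = 0) -> \sum_(i < k) a i * nz (P i) = 0.
Proof.
elim: d => [|d IH] hd c k a P hP hA hrel.
- have e i : nz (P i) = indicator (P i) c.
    rewrite /nz /indicator; case: (asboolP (P i c)) => hc.
    + by rewrite asboolT //; exists c.
    + rewrite asboolF // => -[x hx]; apply: hc.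
      have -> : c = x by apply/rowP => j; rewrite (hA i x hx j (leq0n _)).
      exact: hx.
  by under eq_bigr => i _ do rewrite e; exact: hrel.
- pose j0 : 'I_n := Ordinal hd.
  pose Pt i t := P i `&` [set x : V | x 0 j0 = t].
  pose J i := [set t | exists x, P i x /\ x 0 j0 = t].
  have hslice t : \sum_(i < k) a i * indR (J i) t = 0.
    have e i : indR (J i) t = nz (Pt i t).
      rewrite /indR /nz; have -> // : J i t = (Pt i t !=set0).
      by rewrite propeqE; split => -[x [h1 h2]]; exists x; split.
    under eq_bigr => i _ do rewrite e.
    apply: (IH (ltnW hd) (setc j0 c t)).
    + by move=> i; apply: polyhedron_cap => //; exact: polyhedron_coord.
    + move=> i x [hx hxt] j hj; rewrite mxE; case: eqP => [ej|nej].
      * by rewrite ej.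
      * apply: (hA i x hx j); rewrite ltn_neqAle hj andbT; apply/eqP => e2.
        by apply: nej; apply: val_inj; rewrite /= -e2.
    + move=> x; case: (pselect (x 0 j0 = t)) => hxt.
      * transitivity (\sum_(i < k) a i * indicator (P i) x); last exact: hrel x.
        apply: eq_bigr => i _; congr (_ * _).
        rewrite /indicator; have -> // : Pt i t x = P i x.
        by rewrite propeqE; split => [[]|].
      * rewrite big1 // => i _; rewrite /indicator asboolF ?mulr0 //; by case.
  have := chi1 _ _ _ hslice.
  have hnz i : nz (J i) = nz (P i).
    rewrite /nz; have -> // : (J i !=set0) = (P i !=set0).
    rewrite propeqE; split.
    + by case=> t [x [hx _]]; exists x.
    + by case=> x hx; exists (x 0 j0), x.
  under eq_bigr => i _ do rewrite hnz.
  apply.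
  + move=> i x y z [px [hpx <-]] [pz [hpz <-]] hxy hyz.
    case: (eqVneq (px 0 j0) (pz 0 j0)) => exz.
    * by exists px; split => //; apply: le_anti; rewrite hxy /= exz.
    * have /polyhedronP [s hs] := hP i.
      pose lam := (y - px 0 j0) / (pz 0 j0 - px 0 j0).
      have hd0 : pz 0 j0 - px 0 j0 != 0 by rewrite subr_eq0 eq_sym.
      have hlt : px 0 j0 < pz 0 j0 by rewrite lt_neqAle exz (le_trans hxy hyz).
      exists ((1 - lam) *: px + lam *: pz); split.
      -- rewrite hs; apply: polyS_convex; rewrite -?hs //.
         rewrite /lam; apply/andP; split.
         ++ by apply: divr_ge0; lra.
         ++ by rewrite ler_pdivrMr ?mul1r; lra.
      -- rewrite !mxE.
         have : lam * (pz 0 j0 - px 0 j0) = y - px 0 j0 by rewrite /lam divfK.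
         lra.
  + move=> i [t [x [hx _]]] [B HB].
    have /polyhedronP [s hs] := hP i.
    have [||g [hg Hg]] := lp_min (w := delta_mx 0 j0) (B := B) (s := s).
    * by exists x; rewrite -hs.
    * by move=> y hy; rewrite dotp_delta; apply: HB; exists y; split => //; rewrite hs.
    exists (g 0 j0); first by exists g; split => //; rewrite hs.
    move=> t' [y [hy <-]]; have := Hg y; rewrite !dotp_delta; apply; by rewrite -hs.
  + move=> i [t [x [hx _]]] [B HB].
    have /polyhedronP [s hs] := hP i.
    have [||g [hg Hg]] := lp_max (w := delta_mx 0 j0) (B := B) (s := s).
    * by exists x; rewrite -hs.
    * by move=> y hy; rewrite dotp_delta; apply: HB; exists y; split => //; rewrite hs.
    exists (g 0 j0); first by exists g; split => //; rewrite hs.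
    move=> t' [y [hy <-]]; have := Hg y; rewrite !dotp_delta; apply; by rewrite -hs.
Qed.

Lemma chiG k (a : 'I_k -> int) (P : 'I_k -> set V) :
  (forall i, polyhedron (P i)) -> (forall x, \sum_(i < k) a i * indicator (P i) x = 0) ->
  \sum_(i < k) a i * nz (P i) = 0.
Proof.
move=> hP hrel; apply: (@chi_ind n (leqnn n) 0) => // i x _ j hj.
by move: (ltn_ord j); rewrite ltnNge hj.
Qed.

End Chi.

Section Geo.
Variables (R : realType) (n m : nat) (A : 'I_m -> 'rV[R]_n) (b : 'I_m -> R).
Variables (F : set 'rV[R]_n) (u0 : 'rV[R]_n).
Local Notation V := 'rV[R]_n.
Local Notation Q := [set x : V | forall i, dotp (A i) x <= b i].
Hypotheses (F0 : F !=set0) (FQ : F `<=` Q) (hu0 : normal_cone Q F u0).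

Lemma dotp_sumr (I : Type) (r : seq I) (P : pred I) (G : I -> V) (u : V) :
  dotp u (\sum_(i <- r | P i) G i) = \sum_(i <- r | P i) dotp u (G i).
Proof. by apply: (big_morph (fun x => dotp u x)) => [x y|]; rewrite ?dotpDr ?dotp0r. Qed.

Definition Iset (r : 'I_m) : bool := `[< forall y, F y -> dotp (A r) y = b r >].

Lemma IsetP r y : Iset r -> F y -> dotp (A r) y = b r.
Proof. by move/asboolP; apply. Qed.

Lemma F_mid x y : F x -> F y -> F (2^-1 *: (x + y)).
Proof.
move=> hx hy; have hQ : Q (2^-1 *: (x + y)).
  move=> i; rewrite dotpZr dotpDr; have := FQ hx i; have := FQ hy i; lra.
apply: hu0.2 => // z hz; rewrite dotpZr dotpDr.
have := hu0.1 x hx z hz; have := hu0.1 y hy z hz; lra.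
Qed.

Lemma q0_ex : exists2 q0, F q0 & forall r, ~~ Iset r -> dotp (A r) q0 < b r.
Proof.
have gen (l : seq 'I_m) : exists2 q, F q & forall r, r \in l -> ~~ Iset r -> dotp (A r) q < b r.
  elim: l => [|r l [q qF Hq]]; first by case: F0 => q hq; exists q.
  case: (boolP (Iset r)) => hr.
  - exists q => // r'; rewrite in_cons => /orP [/eqP -> |]; [by rewrite hr | exact: Hq].
  - have : ~ (forall y, F y -> dotp (A r) y = b r) by move=> h; move: hr; rewrite /Iset asboolT.
    move/existsNP => [y /not_implyP [hy hne]].
    have hlt : dotp (A r) y < b r by rewrite lt_neqAle (FQ hy r) andbT; apply/eqP.
    exists (2^-1 *: (q + y)); first exact: F_mid.
    move=> r'; rewrite in_cons => /orP [/eqP -> _|hr' hnr'].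
    + rewrite dotpZr dotpDr; have := FQ qF r; lra.
    + rewrite dotpZr dotpDr; have := Hq r' hr' hnr'; have := FQ hy r'; lra.
have [q qF Hq] := gen (enum 'I_m); exists q => // r; apply: Hq; by rewrite mem_enum.
Qed.

Lemma small_eps (P : pred 'I_m) (f : 'I_m -> R) : (forall r, P r -> 0 < f r) ->
  exists2 e, 0 < e & forall r, P r -> e < f r.
Proof.
move=> H; have [|e e0 He] := @ex_pos_below R [seq f r | r <- enum 'I_m & P r].
  by move=> x /mapP [r]; rewrite mem_filter => /andP [hr _] ->; apply: H.
exists e => // r hr; apply: He; apply/mapP; exists r => //; by rewrite mem_filter hr mem_enum.
Qed.

Lemma small_eps2 (P : pred 'I_m) (S D : 'I_m -> R) : (forall r, P r -> 0 < S r) ->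
  exists2 e, 0 < e & forall r, P r -> e * D r <= S r.
Proof.
move=> H; have [|e e0 He] := @small_eps P (fun r => S r / (`|D r| + 1)).
  by move=> r hr; apply: divr_gt0; [exact: H | have := normr_ge0 (D r); lra].
exists e => // r hr; have := He r hr; rewrite ltr_pdivlMr; last by have := normr_ge0 (D r); lra.
have := ler_wpM2l (ltW e0) (ler_norm (D r)); nra.
Qed.

Lemma Ftilde y : Q y -> (forall r, Iset r -> dotp (A r) y = b r) -> F y.
Proof.
move=> Qy Hy.
have [q0 hq0 Hq0] := q0_ex.
have [|e e0 He] := @small_eps2 (fun r => ~~ Iset r) (fun r => b r - dotp (A r) q0)
  (fun r => dotp (A r) q0 - dotp (A r) y).
  by move=> r hr; have := Hq0 r hr; lra.
pose z := q0 + e *: (q0 - y).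
have Qz : Q z.
  move=> r; rewrite /z dotpDr dotpZr dotpBr; case: (boolP (Iset r)) => hr.
  - by rewrite (IsetP hr hq0) (Hy r hr) subrr mulr0 addr0.
  - by have := He r hr; lra.
have := hu0.1 q0 hq0 z Qz; rewrite /z dotpDr dotpZr dotpBr => h.
have hq : dotp u0 q0 <= dotp u0 y.
  have : e * (dotp u0 q0 - dotp u0 y) <= 0 by lra.
  by rewrite pmulr_rle0 // subr_le0.
apply: hu0.2 => // x hx; apply: le_trans hq; exact: hu0.1.
Qed.

Definition Cset : set V := [set d | forall r, Iset r -> dotp (A r) d <= 0].

Lemma tangent_eq : tangent_cone Q F = Cset.
Proof.
apply/seteqP; split.
- move=> x [k [s [c [Hc ->]]]] r hr; rewrite dotp_sumr; apply: sumr_le0 => i _.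
  have [c0 [v [v' [hv [hv' ->]]]]] := Hc i.
  rewrite dotpZr dotpBr (IsetP hr hv); apply: mulr_ge0_le0 => //.
  by rewrite subr_le0; exact: hv'.
- move=> d hd.
  have [q0 hq0 Hq0] := q0_ex.
  have [|e e0 He] := @small_eps2 (fun r => ~~ Iset r) (fun r => b r - dotp (A r) q0)
    (fun r => dotp (A r) d).
    by move=> r hr; have := Hq0 r hr; lra.
  have Qy : Q (q0 + e *: d).
    move=> r; rewrite dotpDr dotpZr; case: (boolP (Iset r)) => hr.
    + rewrite (IsetP hr hq0); have := hd r hr; nra.
    + by have := He r hr; lra.
  exists 1%N, (fun _ => (q0 + e *: d) - q0), (fun _ => e^-1); split.
  + move=> i; split; first by rewrite invr_ge0 ltW.
    by exists q0, (q0 + e *: d).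
  + by rewrite big_ord1 addrC addKr scalerA mulVf ?gt_eqF // scale1r.
Qed.

Definition Lset : set V := [set d | forall r, Iset r -> dotp (A r) d = 0].

Lemma lineal_eq : lineal Cset = Lset.
Proof.
apply/seteqP; split.
- move=> x [L [[L0 [Ladd Lsc]] [LC Lx]]] r hr; apply: le_anti.
  rewrite (LC x Lx r hr) /=.
  have := LC _ (Lsc (-1) x Lx) r hr; rewrite dotpZr; lra.
- move=> x hx; exists Lset; split; last by split => // y hy r hr; rewrite hy.
  split; first by move=> r _; rewrite dotp0r.
  split; first by move=> y z hy hz r hr; rewrite dotpDr hy // hz // addr0.
  by move=> a y hy r hr; rewrite dotpZr hy // mulr0.
Qed.

Lemma nc_pos (kap : 'I_m -> R) : (forall r, Iset r -> 0 < kap r) ->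
  normal_cone Q F (\sum_(r | Iset r) kap r *: A r).
Proof.
move=> hk; split.
- move=> y Fy x Qx; rewrite !dotp_suml; apply: ler_sum => r hr; rewrite !dotpZl.
  by apply: ler_wpM2l; [exact: (ltW (hk r hr)) | rewrite (IsetP hr Fy); exact: Qx].
- move=> y Qy Hy; apply: Ftilde => // r hr.
  have [q0 hq0 _] := q0_ex.
  have := Hy q0 (FQ hq0); rewrite !dotp_suml => hle.
  have hs : \sum_(r | Iset r) kap r * (b r - dotp (A r) y) = 0.
    apply: le_anti; apply/andP; split; last first.
      by apply: sumr_ge0 => r' hr'; apply: mulr_ge0; [exact: (ltW (hk r' hr')) | rewrite subr_ge0; exact: Qy].
    under eq_bigr => r' hr' do rewrite mulrBr.
    rewrite sumrB subr_le0.
    have e1 : \sum_(r' | Iset r') kap r' * b r' = \sum_(r' | Iset r') dotp (kap r' *: A r') q0.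
      by apply: eq_bigr => r' hr'; rewrite dotpZl (IsetP hr' hq0).
    have e2 : \sum_(r' | Iset r') kap r' * dotp (A r') y = \sum_(r' | Iset r') dotp (kap r' *: A r') y.
      by apply: eq_bigr => r' hr'; rewrite dotpZl.
    by rewrite e1 e2.
  have hnn r' : Iset r' -> 0 <= kap r' * (b r' - dotp (A r') y).
    by move=> hr'; apply: mulr_ge0; [exact: (ltW (hk r' hr')) | rewrite subr_ge0; exact: Qy].
  move: (psumr_eq0P hnn hs hr) => /eqP; rewrite mulf_eq0 gt_eqF ?hk //= subr_eq0 => /eqP h.
  by rewrite h.
Qed.

Lemma nc_shift w r t : normal_cone Q F w -> Iset r -> 0 <= t ->
  normal_cone Q F (w + t *: A r).
Proof.
move=> hw hr t0; split.
- move=> y Fy x Qx; rewrite !dotpDl !dotpZl; apply: lerD; first exact: hw.1.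
  by apply: ler_wpM2l => //; rewrite (IsetP hr Fy); exact: Qx.
- move=> y Qy Hy; case: F0 => q Fq.
  have := Hy q (FQ Fq); rewrite !dotpDl !dotpZl => h1.
  have h2 := hw.1 q Fq y Qy.
  have h3 : t * dotp (A r) y <= t * dotp (A r) q.
    by apply: ler_wpM2l => //; rewrite (IsetP hr Fq); exact: Qy.
  apply: hw.2 => // x Qx; apply: le_trans (hw.1 q Fq x Qx) _; lra.
Qed.

End Geo.

Section Main.
Variables (R : realType) (n m : nat) (A : 'I_m -> 'rV[R]_n) (b : 'I_m -> R).
Variables (F : set 'rV[R]_n) (u0 v : 'rV[R]_n).
Local Notation V := 'rV[R]_n.
Local Notation Q := [set x : V | forall i, dotp (A i) x <= b i].
Hypotheses (F0 : F !=set0) (FQ : F `<=` Q) (hu0 : normal_cone Q F u0).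
Local Notation I r := (Iset A b F r).

Definition Kset : set V := [set x | forall r, I r -> dotp (A r) v <= dotp (A r) x].
Definition Eset : set V := [set x | forall r, I r -> dotp (A r) x = dotp (A r) v].
Definition Hset : set V := [set x | forall r, I r -> dotp (A r) x <= dotp (A r) v].
Definition us : V := \sum_(r | I r) A r.
Definition Oset (e : R) : set V := [set x | dotp us v + e <= dotp us x].
Definition fval (P : set V) : int :=
  nz (P `&` Kset) - nz (P `&` Kset `&` [set x | dotp us v < dotp us x]).

Lemma transl (S : set V) x : translate S v x <-> S (x - v).
Proof.
split; first by case=> c hc <-; rewrite addrK.
by move=> h; exists (x - v) => //; rewrite subrK.
Qed.

Lemma jbarE P : jbar (tangent_cone Q F) v P =
  if `[< P `<=` Hset /\ P `&` Eset !=set0 >] then 1 else 0.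
Proof.
rewrite /jbar (tangent_eq F0 FQ hu0).
have -> // : tightly_contains (Cset A b F) v P = (P `<=` Hset /\ P `&` Eset !=set0).
rewrite propeqE /tightly_contains lineal_eq; split.
- case=> h1 [x [hx hxL]]; split.
  + move=> y hy r hr; have := (proj1 (transl _ _) (h1 y hy)) r hr.
    by rewrite dotpBr subr_le0.
  + exists x; split => // r hr; have := (proj1 (transl _ _) hxL) r hr.
    by rewrite dotpBr => /eqP; rewrite subr_eq0 => /eqP.
- case=> h1 [x [hx hxE]]; split.
  + move=> y hy; apply/transl => r hr; rewrite dotpBr subr_le0; exact: h1.
  + exists x; split => //; apply/transl => r hr; by rewrite dotpBr hxE // subrr.
Qed.

Lemma KE x : Kset x -> dotp us x <= dotp us v -> Eset x.
Proof.
move=> hK hle.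
have hs : \sum_(r | I r) (dotp (A r) x - dotp (A r) v) = 0.
  apply: le_anti; apply/andP; split.
  - by rewrite sumrB -!dotp_suml subr_le0.
  - by apply: sumr_ge0 => r hr; rewrite subr_ge0; exact: hK.
move=> r hr; apply/eqP; rewrite -subr_eq0; apply/eqP.
by apply: (psumr_eq0P _ hs) => // r' hr'; rewrite subr_ge0; exact: hK.
Qed.

Lemma defplus_arg (P : set V) : ext_deformation Q P ->
  forall p, P p -> Eset p -> (forall x, P x -> Kset x -> Eset x) -> P `<=` Hset.
Proof.
move=> [hP hdef] p hp hpE hKE.
have /polyhedronP [s hs] := hP.
pose S : seq (V * R * R) := [seq (c.1, 0, 0) | c <- s] ++
  ([seq (- A r, 0, 0) | r <- enum 'I_m & I r] ++ [:: (- us, 0, -1)]).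
have infeas : forall d, ~~ satall S d 0.
  move=> d; apply/negP; rewrite /satall !all_cat !all_map /= andbT => /and3P [h1 h2 h3].
  move: h3; rewrite /sat /= mulr0 addr0 dotpNl => h3.
  have Py : P (p + d).
    move: hp; rewrite hs /polyS /= => /allP hp'; apply/allP => c hc.
    have := hp' c hc; move/allP: h1 => /(_ c hc); rewrite /= /sat /= mulr0 addr0 dotpDr.
    lra.
  have Ky : Kset (p + d).
    move=> r hr; rewrite dotpDr (hpE r hr).
    have hrin : r \in [seq r <- enum 'I_m | I r] by rewrite mem_filter hr mem_enum.
    move/allP: h2 => /(_ r hrin); rewrite /= /sat /= mulr0 addr0 dotpNl; lra.
  have Ey := hKE _ Py Ky.
  have : dotp us d = 0.
    rewrite /us dotp_suml big1 // => r hr.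
    by have := Ey r hr; rewrite dotpDr (hpE r hr); lra.
  lra.
have [c [hc hc1 hc2]] := farkas infeas.
pose Phi (c : V * R * R) := exists nu (lam : 'I_m -> R) (B : R),
  [/\ 0 <= nu, (forall r, 0 <= lam r), c.2 = - nu &
   forall y, P y -> dotp (c.1.1 + nu *: us + \sum_(r | I r) lam r *: A r) y <= B].
have hPhi : forall c, conic S c -> Phi c.
  move=> c0; elim => {c0}.
  - move=> c0; rewrite !mem_cat => /orP [|/orP []].
    + move=> /mapP [c' hc' ->]; exists 0, (fun _ => 0), c'.2; split => //=; first by rewrite oppr0.
      move=> y; rewrite hs => /allP /(_ c' hc').
      by rewrite scale0r addr0 big1 ?addr0 // => r _; rewrite scale0r.
    + move=> /mapP [r]; rewrite mem_filter => /andP [hr _] ->.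
      exists 0, (fun r' => if r' == r then 1 else 0), 0; split => //=.
      * by move=> r'; case: eqP.
      * by rewrite oppr0.
      * move=> y _; rewrite scale0r addr0 (bigD1 r) //= eqxx scale1r big1 ?addr0.
          by rewrite addNr dotp0l.
        by move=> r' /andP [_ /negbTE ->]; rewrite scale0r.
    + rewrite in_cons in_nil orbF => /eqP ->.
      exists 1, (fun _ => 0), 0; split => //=.
      move=> y _; rewrite scale1r addNr add0r big1 ?dotp0l // => r _; by rewrite scale0r.
  - exists 0, (fun _ => 0), 0; split => //=; first by rewrite oppr0.
    move=> y _; rewrite scale0r !add0r big1 ?dotp0l // => r _; by rewrite scale0r.
  - move=> c1 c2 _ [nu1 [l1 [B1 [n1 h1 e1 H1]]]] _ [nu2 [l2 [B2 [n2 h2 e2 H2]]]].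
    exists (nu1 + nu2), (fun r => l1 r + l2 r), (B1 + B2); split => //=.
    + exact: addr_ge0.
    + by move=> r; apply: addr_ge0.
    + by rewrite e1 e2 opprD.
    + move=> y hy.
      have -> : c1.1.1 + c2.1.1 + (nu1 + nu2) *: us + \sum_(r | I r) (l1 r + l2 r) *: A r =
        (c1.1.1 + nu1 *: us + \sum_(r | I r) l1 r *: A r) +
        (c2.1.1 + nu2 *: us + \sum_(r | I r) l2 r *: A r).
        rewrite scalerDl.
        under eq_bigr => r _ do rewrite scalerDl.
        rewrite big_split /=.
        by rewrite [RHS]addrACA; congr (_ + _); rewrite addrACA.
      by rewrite dotpDl; apply: lerD; [exact: H1 | exact: H2].
  - move=> a c0 a0 _ [nu [l [B [n0 h0 e0 H0]]]].
    exists (a * nu), (fun r => a * l r), (a * B); split => //=.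
    + exact: mulr_ge0.
    + by move=> r; apply: mulr_ge0.
    + by rewrite e0 mulrN.
    + move=> y hy.
      have -> : a *: c0.1.1 + (a * nu) *: us + \sum_(r | I r) (a * l r) *: A r =
        a *: (c0.1.1 + nu *: us + \sum_(r | I r) l r *: A r).
        rewrite !scalerDr scalerA; congr (_ + _); rewrite scaler_sumr.
        by apply: eq_bigr => r _; rewrite scalerA.
      rewrite dotpZl; apply: ler_wpM2l => //; exact: H0.
have [nu [lam [B [nu0 lam0 enu HB]]]] := hPhi c hc.
have nupos : 0 < nu by move: hc2; rewrite enu oppr_lt0.
pose w := \sum_(r | I r) (nu + lam r) *: A r.
have ew : c.1.1 + nu *: us + \sum_(r | I r) lam r *: A r = w.
  rewrite hc1 add0r /w /us scaler_sumr -big_split /=.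
  by apply: eq_bigr => r _; rewrite scalerDl.
have hw : normal_cone Q F w.
  apply: (nc_pos F0 FQ hu0) => r _; apply: lt_le_trans nupos _; rewrite lerDl; exact: lam0.
have wB : forall y, P y -> dotp w y <= B by move=> y hy; rewrite -ew; exact: HB.
have [g [hg Hg]] : exists g, polyS s g /\ forall y, polyS s y -> dotp w y <= dotp w g.
  apply: (lp_max (B := B)); first by exists p; rewrite -hs.
  by move=> y hy; apply: wB; rewrite hs.
rewrite -hs in hg Hg.
pose G := [set y | P y /\ forall x, P x -> dotp w x <= dotp w y].
have ncG : normal_cone P G w.
  split; first by move=> y [_ hy] x hx; exact: hy.
  by move=> y hy Hy; split.
have fanG : normal_fan P (normal_cone P G).
  exists G; split => //; split; first by exists g; split.
  split; first by move=> y [].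
  by exists w.
have [S0 [hS0 eqS]] := hdef _ fanG.
have : (\bigcup_(c in S0) c) w by rewrite -eqS.
case=> c' hc' c'w.
have [F' [hF' ec']] := hS0 c' hc'.
have argF (X : set V) : X `<=` Q -> normal_cone Q X w ->
    X = [set y | Q y /\ forall x, Q x -> dotp w x <= dotp w y].
  move=> XQ hX; apply/seteqP; split.
  - by move=> y hy; split; [exact: XQ | move=> x hx; exact: hX.1].
  - by move=> y [hy Hy]; exact: hX.2.
have eF : F' = F.
  have hF'w : normal_cone Q F' w by rewrite -ec'.
  by rewrite (argF F' hF'.2.1 hF'w) (argF F FQ hw).
have sub : forall t r, I r -> 0 <= t -> normal_cone P G (w + t *: A r).
  move=> t r hr t0; rewrite eqS; exists c' => //; rewrite ec' eF.
  exact: nc_shift.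
have hgK : forall r, I r -> forall y, P y -> dotp (A r) y <= dotp (A r) g.
  move=> r hr y hy; rewrite leNgt; apply/negP => hlt.
  pose t := (dotp w g - dotp w y + 1) / (dotp (A r) y - dotp (A r) g).
  have hd : 0 < dotp (A r) y - dotp (A r) g by rewrite subr_gt0.
  have wyg : dotp w y <= dotp w g by exact: Hg.
  have t0 : 0 <= t by apply: divr_ge0; lra.
  have := (sub t r hr t0).1 g (conj hg Hg) y hy.
  rewrite !dotpDl !dotpZl.
  have : t * (dotp (A r) y - dotp (A r) g) = dotp w g - dotp w y + 1.
    by rewrite /t divfK ?gt_eqF.
  nra.
have Kg : Kset g by move=> r hr; rewrite -(hpE r hr); exact: hgK.
have Eg := hKE _ hg Kg.
by move=> y hy r hr; rewrite -(Eg r hr); exact: hgK.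
Qed.


Lemma jbar_f P : ext_deformation Q P -> jbar (tangent_cone Q F) v P = fval P.
Proof.
move=> hdef; rewrite jbarE /fval /nz.
case: (asboolP (P `<=` Hset /\ P `&` Eset !=set0)) => [[hH [p [hp hpE]]]|nt].
- rewrite asboolT; last by exists p; split => // r hr; rewrite hpE.
  rewrite asboolF ?subr0 // => -[x [[hx hxK] hlt]].
  have : dotp us x <= dotp us v.
    by rewrite /us !dotp_suml; apply: ler_sum => r hr; exact: hH.
  by rewrite leNgt hlt.
- case: (pselect (P `&` Kset !=set0)) => [[p [hp hpK]]|emp].
  + rewrite asboolT; last by exists p.
    rewrite asboolT ?subrr //.
    apply: contrapT => hno; apply: nt.
    have hKE : forall x, P x -> Kset x -> Eset x.
      move=> x hx hxK; apply: KE => //; rewrite leNgt; apply/negP => hlt.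
      by apply: hno; exists x; split.
    split; first exact: (defplus_arg hdef hp (hKE p hp hpK) hKE).
    by exists p; split => //; exact: hKE.
  + rewrite asboolF // asboolF ?subrr // => -[x [[hx hxK] _]]; apply: emp; by exists x.
Qed.

Lemma polyK : polyhedron Kset.
Proof.
apply/polyhedronP; exists [seq (- A r, - dotp (A r) v) | r <- enum 'I_m & I r].
apply/seteqP; split => x; rewrite /polyS /= all_map.
- move=> hK; apply/allP => r; rewrite mem_filter => /andP [hr _] /=.
  by rewrite dotpNl lerN2; exact: hK.
- move/allP => h r hr; have := h r; rewrite mem_filter hr mem_enum /= dotpNl lerN2.
  by apply.
Qed.

Lemma polyO e : polyhedron (Oset e).
Proof.
apply/polyhedronP; exists [:: (- us, - (dotp us v + e))].
apply/seteqP; split => x; rewrite /polyS /Oset /= andbT dotpNl lerN2 //.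
Qed.

Lemma rel_cap k (a : 'I_k -> int) (P : 'I_k -> set V) (Z : set V) :
  (forall x, \sum_(i < k) a i * indicator (P i) x = 0) ->
  forall x, \sum_(i < k) a i * indicator (P i `&` Z) x = 0.
Proof.
move=> h x; case: (pselect (Z x)) => hz.
- transitivity (\sum_(i < k) a i * indicator (P i) x); last exact: h x.
  apply: eq_bigr => i _; congr (_ * _); rewrite /indicator.
  have -> // : (P i `&` Z) x = P i x.
  by rewrite propeqE; split => [[]|].
- rewrite big1 // => i _; rewrite /indicator asboolF ?mulr0 //; by case.
Qed.

Lemma main_val k (a : 'I_k -> int) (P : 'I_k -> set V) :
  (forall i, ext_deformation Q (P i)) ->
  (forall x, \sum_(i < k) a i * indicator (P i) x = 0) ->
  \sum_(i < k) a i * jbar (tangent_cone Q F) v (P i) = 0.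
Proof.
move=> hP hrel.
under eq_bigr => i _ do rewrite jbar_f // /fval mulrBr.
rewrite sumrB.
have hpol i : polyhedron (P i) by case: (hP i).
have h1 : \sum_(i < k) a i * nz (P i `&` Kset) = 0.
  exact: (chiG (fun i => polyhedron_cap (hpol i) polyK) (rel_cap Kset hrel)).
rewrite h1 sub0r.
have ex_i i : exists e, 0 < e /\
   ((P i `&` Kset `&` [set x | dotp us v < dotp us x]) !=set0 ->
    (P i `&` Kset `&` Oset e) !=set0).
  case: (pselect ((P i `&` Kset `&` [set x | dotp us v < dotp us x]) !=set0)) =>
    [[x [[hx hxK] hlt]]|no].
  - exists (dotp us x - dotp us v); split; first by rewrite subr_gt0.
    move=> _; exists x; split => //; rewrite /Oset /=; lra.
  - by exists 1; split => // h; exfalso.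
have [eps Heps] := choice ex_i.
have [|d d0 Hd] := @ex_pos_below R [seq eps i | i <- enum 'I_k].
  by move=> x /mapP [i _ ->]; exact: (Heps i).1.
have e2 i : nz (P i `&` Kset `&` [set x | dotp us v < dotp us x]) = nz (P i `&` Kset `&` Oset d).
  rewrite /nz; have -> // : ((P i `&` Kset `&` [set x | dotp us v < dotp us x]) !=set0) =
                        ((P i `&` Kset `&` Oset d) !=set0).
  rewrite propeqE; split.
  - move/((Heps i).2) => [x [[hx hxK] hxo]]; exists x; split => //.
    have hi : eps i \in [seq eps i | i <- enum 'I_k] by apply: map_f; rewrite mem_enum.
    move: hxo; rewrite /Oset /=; have := Hd _ hi; lra.
  - case=> x [[hx hxK] hxo]; exists x; split => //; move: hxo; rewrite /Oset /=; lra.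
under eq_bigr => i _ do rewrite e2.
have h2 : \sum_(i < k) a i * nz (P i `&` Kset `&` Oset d) = 0.
  exact: (chiG (fun i => polyhedron_cap (polyhedron_cap (hpol i) polyK) (polyO d))
                (rel_cap (Oset d) (rel_cap Kset hrel))).
by rewrite h2 oppr0.
Qed.

End Main.

Theorem theorem2p1 (R : realType) (n : nat) (Q F : set 'rV[R]_n) (v : 'rV[R]_n) :
  polyhedron Q -> face Q F ->
  valuative (Defplus Q) (jbar (tangent_cone Q F) v).
Proof.
move=> [m [A [b ->]]] [F0 [FQ [u0 hu0]]] k a P hP hrel.
exact: (main_val v F0 FQ hu0 hP hrel).
Qed.
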